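(* Let $n\geq 8$ and let $x,y\in V(K_n)$ be distinct. Then in the Waiter-Client game on $K_n$, within $n$ rounds Waiter can force Client to build a red Hamilton path between $x$ and $y$.
   Context: Waiter-Client game on $K_n$: in each round Waiter offers two free edges of $K_n$, Client colors one of them red and the other becomes blue. *)

(* Defs.v *)
From mathcomp Require Import all_boot.
Set Implicit Arguments. Unset Strict Implicit. Unset Printing Implicit Defensive.

Definition is_edge (n : nat) (e : {set 'I_n}) : bool := #|e| == 2.

Definition free_edge (n : nat) (R B : {set {set 'I_n}}) (e : {set 'I_n}) : bool :=
  [&& is_edge e, e \notin R & e \notin B].

Definition red_ham_path (n : nat) (R : {set {set 'I_n}}) (x y : 'I_n) : Prop :=
  exists p : seq 'I_n,
    [/\ uniq (x :: p), size (x :: p) = n, last x p = y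
      & path (fun a b => [set a; b] \in R) x p].

(* In each round Waiter offers two distinct free edges e1, e2; Client colours
   one of them red and the other becomes blue. *)
Fixpoint waiter_wins (n : nat) (x y : 'I_n) (k : nat)
    (R B : {set {set 'I_n}}) : Prop :=
  red_ham_path R x y \/
  match k with
  | 0 => False
  | k'.+1 => exists e1 e2 : {set 'I_n},
      [/\ e1 != e2, free_edge R B e1, free_edge R B e2,
          waiter_wins x y k' (e1 |: R) (e2 |: B)
        & waiter_wins x y k' (e2 |: R) (e1 |: B)]
  end.

(* Main.v *)
Require Import Defs.
From mathcomp Require Import all_boot zify.
Set Implicit Arguments. Unset Strict Implicit. Unset Printing Implicit Defensive.

Definition ueq (e f : nat * nat) : bool :=
  ((e.1 == f.1) && (e.2 == f.2)) || ((e.1 == f.2) && (e.2 == f.1)).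
Definition inL (e : nat * nat) (L : seq (nat * nat)) : bool := has (ueq e) L.

Inductive strat := SL (p : seq nat) | SN (a b c d : nat) (s1 s2 : strat).

Definition lrel (R : seq (nat * nat)) (a b : nat) : bool :=
  [&& a < 8, b < 8, a != b & inL (a, b) R].

Definition leafok (R : seq (nat * nat)) (p : seq nat) : bool :=
  [&& perm_eq p (iota 1 7), last 0 p == 7 & path (lrel R) 0 p].

Fixpoint chk (k : nat) (R B : seq (nat * nat)) (t : strat) {struct t} : bool :=
  match t with
  | SL p => leafok R p
  | SN a b c d s1 s2 =>
    match k with
    | 0 => false
    | k'.+1 =>
      [&& [&& a < 8, b < 8, c < 8 & d < 8], [&& a != b, c != d,
          ~~ ueq (a, b) (c, d) & ~~ inL (a, b) (R ++ B)], ~~ inL (c, d) (R ++ B),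
          chk k' ((a, b) :: R) ((c, d) :: B) s1 &
          chk k' ((c, d) :: R) ((a, b) :: B) s2]
    end
  end.

Lemma set2_eq (T : finType) (u v w z : T) : u != v ->
  ([set u; v] == [set w; z]) = ((u == w) && (v == z)) || ((u == z) && (v == w)).
Proof.
move=> uv; apply/eqP/idP.
- move=> E.
  have hu : u \in [set w; z] by rewrite -E !inE eqxx.
  have hv : v \in [set w; z] by rewrite -E !inE eqxx orbT.
  have hw : w \in [set u; v] by rewrite E !inE eqxx.
  have hz : z \in [set u; v] by rewrite E !inE eqxx orbT.
  move: hu hv hw hz; rewrite !inE.
  case/orP=> /eqP hu; case/orP=> /eqP hv; subst; rewrite ?eqxx ?orbT //=.
  + by rewrite eqxx in uv.
  + by rewrite eqxx in uv.
- by case/orP=> /andP[/eqP -> /eqP ->] //; rewrite setUC.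
Qed.

Section Endgame.
Variables (n : nat) (x : 'I_n) (f : nat -> 'I_n).
Hypothesis finj : forall i j, i < 8 -> j < 8 -> f i = f j -> i = j.

Definition corr (L : seq (nat * nat)) (S : {set {set 'I_n}}) :=
  forall a b, a < 8 -> b < 8 -> a != b -> ([set f a; f b] \in S) = inL (a, b) L.

Lemma fneq a b : a < 8 -> b < 8 -> a != b -> f a != f b.
Proof. by move=> ha hb; apply: contra => /eqP /finj -> . Qed.

Lemma set2f a b c d : a < 8 -> b < 8 -> c < 8 -> d < 8 -> a != b ->
  ([set f a; f b] == [set f c; f d]) = ueq (a, b) (c, d).
Proof.
move=> ha hb hc hd ab; rewrite set2_eq ?fneq //.
rewrite /ueq /=.
have E : forall i j, i < 8 -> j < 8 -> (f i == f j) = (i == j).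
  by move=> i j hi hj; apply/eqP/eqP => [/finj|->]; auto.
by rewrite !E.
Qed.

Lemma corr_add L S a b : a < 8 -> b < 8 -> a != b -> corr L S ->
  corr ((a, b) :: L) ([set f a; f b] |: S).
Proof.
move=> ha hb ab C a' b' ha' hb' ab'.
by rewrite in_setU1 C // set2f // /inL /= .
Qed.

Definition redrel (R : {set {set 'I_n}}) (a b : 'I_n) := [set a; b] \in R.

Lemma endgame (t : strat) : forall k Rl Bl R B q,
  chk k Rl Bl t -> corr Rl R -> corr Bl B ->
  path (redrel R) x q -> last x q = f 0 ->
  perm_eq (x :: q ++ map f (iota 1 7)) (enum 'I_n) ->
  waiter_wins x (f 7) k R B.
Proof.
elim: t => [p|a b c d s1 IH1 s2 IH2] k Rl Bl R B q.
- rewrite /= /leafok => /and3P[pp /eqP lp pa] CR CB pq lq pe.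
  case: k => [|k]; left;
  (exists (q ++ map f p); split;
   [ rewrite (perm_uniq (_ : perm_eq _ (x :: q ++ map f (iota 1 7)))) ?(perm_uniq pe) ?enum_uniq //;
     by rewrite perm_cons perm_cat2l perm_map
   | by have := perm_size pe; rewrite size_enum_ord /= !size_cat !size_map (perm_size pp)
   | by rewrite last_cat lq last_map lp
   | rewrite cat_path pq lq /=; apply: homo_path; first last;
     [exact: pa | move=> i j /and4P[hi hj ij hin]; by rewrite /redrel CR]]).
- case: k => [|k] //=.
  case/and5P => /and4P[ha hb hc hd] /and4P[ab cd nu nab] ncd c1 c2 CR CB pq lq pe.
  right; exists [set f a; f b], [set f c; f d]; split.
  + by rewrite set2f.
  + rewrite /free_edge /is_edge cards2 fneq //= CR // CB //.
    by move: nab; rewrite /inL has_cat negb_or => /andP[-> ->].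
  + rewrite /free_edge /is_edge cards2 fneq //= CR // CB //.
    by move: ncd; rewrite /inL has_cat negb_or => /andP[-> ->].
  + apply: (IH1 k _ _ _ _ q c1); try apply: corr_add => //.
    - by apply: sub_path pq => u v; rewrite /redrel => h; rewrite in_setU1 h orbT.
    - by [].
    - by [].
  + apply: (IH2 k _ _ _ _ q c2); try apply: corr_add => //.
    - by apply: sub_path pq => u v; rewrite /redrel => h; rewrite in_setU1 h orbT.
    - by [].
    - by [].
Qed.
End Endgame.

Definition tK : strat :=
(SN 2 6 3 6
(SN 4 6 5 6
(SN 1 4 4 5
(SN 1 5 2 5
(SN 2 3 3 5
(SN 0 5 5 7
(SN 1 3 3 4
(SN 3 7 4 7
(SL [::5;1;4;6;2;3;7])
(SL [::5;1;3;2;6;4;7]))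
(SN 3 7 6 7
(SL [::5;1;4;6;2;3;7])
(SL [::5;1;4;3;2;6;7])))
(SN 0 4 0 6
(SN 0 3 1 3
(SL [::3;2;6;4;1;5;7])
(SL [::4;6;2;3;1;5;7]))
(SN 0 3 3 4
(SL [::3;2;6;4;1;5;7])
(SL [::6;2;3;4;1;5;7]))))
(SN 0 2 0 3
(SN 1 3 1 7
(SN 3 7 5 7
(SL [::2;6;4;1;5;3;7])
(SL [::2;6;4;1;3;5;7]))
(SN 3 4 3 7
(SL [::2;6;4;3;5;1;7])
(SL [::2;6;4;1;5;3;7])))
(SN 1 2 2 4
(SN 2 7 4 7
(SL [::3;5;1;4;6;2;7])
(SL [::3;5;1;2;6;4;7]))
(SN 2 7 6 7
(SL [::3;5;1;4;6;2;7])
(SL [::3;5;1;4;2;6;7])))))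
(SN 1 3 3 5
(SN 0 5 5 7
(SN 1 7 2 3
(SN 3 4 3 7
(SL [::5;2;6;4;3;1;7])
(SL [::5;2;6;4;1;3;7]))
(SN 3 7 6 7
(SL [::5;2;6;4;1;3;7])
(SL [::5;2;3;1;4;6;7])))
(SN 0 1 0 6
(SN 0 3 3 4
(SL [::3;1;4;6;2;5;7])
(SL [::1;3;4;6;2;5;7]))
(SN 0 3 2 3
(SL [::3;1;4;6;2;5;7])
(SL [::6;4;1;3;2;5;7]))))
(SN 0 1 0 3
(SN 2 3 3 4
(SN 3 7 5 7
(SL [::1;4;6;2;5;3;7])
(SL [::1;4;6;2;3;5;7]))
(SN 3 7 6 7
(SL [::1;4;6;2;5;3;7])
(SL [::1;4;3;5;2;6;7])))
(SN 1 2 1 6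
(SN 1 7 6 7
(SL [::3;5;2;6;4;1;7])
(SL [::3;5;2;1;4;6;7]))
(SN 1 7 4 7
(SL [::3;5;2;6;4;1;7])
(SL [::3;5;2;6;1;4;7]))))))
(SN 1 2 1 5
(SN 1 3 3 5
(SN 0 5 5 7
(SN 1 7 3 4
(SN 2 3 3 7
(SL [::5;4;6;2;3;1;7])
(SL [::5;4;6;2;1;3;7]))
(SN 3 7 6 7
(SL [::5;4;6;2;1;3;7])
(SL [::5;4;3;1;2;6;7])))
(SN 0 1 0 6
(SN 0 3 2 3
(SL [::3;1;2;6;4;5;7])
(SL [::1;3;2;6;4;5;7]))
(SN 0 3 3 4
(SL [::3;1;2;6;4;5;7])
(SL [::6;2;1;3;4;5;7]))))
(SN 0 1 1 7
(SN 2 3 3 4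
(SN 3 7 6 7
(SL [::1;2;6;4;5;3;7])
(SL [::1;2;3;5;4;6;7]))
(SN 3 7 5 7
(SL [::1;2;6;4;5;3;7])
(SL [::1;2;6;4;3;5;7])))
(SN 0 5 0 6
(SN 0 3 3 4
(SL [::3;5;4;6;2;1;7])
(SL [::5;3;4;6;2;1;7]))
(SN 0 3 2 3
(SL [::3;5;4;6;2;1;7])
(SL [::6;4;5;3;2;1;7])))))
(SN 1 3 2 3
(SN 0 2 0 3
(SN 1 7 3 4
(SN 3 5 3 7
(SL [::2;6;4;5;3;1;7])
(SL [::2;6;4;5;1;3;7]))
(SN 3 7 5 7
(SL [::2;6;4;5;1;3;7])
(SL [::2;6;4;3;1;5;7])))
(SN 2 4 2 5
(SN 2 7 6 7
(SL [::3;1;5;4;6;2;7])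
(SL [::3;1;5;4;2;6;7]))
(SN 2 7 4 7
(SL [::3;1;5;4;6;2;7])
(SL [::3;1;5;2;6;4;7]))))
(SN 0 1 1 7
(SN 3 4 3 5
(SN 3 7 6 7
(SL [::1;5;4;6;2;3;7])
(SL [::1;5;4;3;2;6;7]))
(SN 3 7 4 7
(SL [::1;5;4;6;2;3;7])
(SL [::1;5;3;2;6;4;7])))
(SN 0 4 0 6
(SN 0 3 3 5
(SL [::3;2;6;4;5;1;7])
(SL [::4;6;2;3;5;1;7]))
(SN 0 3 3 4
(SL [::3;2;6;4;5;1;7])
(SL [::6;2;3;4;5;1;7])))))))
(SN 2 3 2 4
(SN 1 3 1 5
(SN 1 4 4 5
(SN 0 4 4 7
(SN 2 5 2 7
(SN 5 7 6 7
(SL [::4;1;3;2;6;5;7])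
(SL [::4;1;3;2;5;6;7]))
(SN 3 5 5 7
(SL [::4;1;3;5;6;2;7])
(SL [::4;1;3;2;6;5;7])))
(SN 0 2 0 6
(SN 0 5 3 5
(SL [::5;6;2;3;1;4;7])
(SL [::2;6;5;3;1;4;7]))
(SN 0 5 2 5
(SL [::5;6;2;3;1;4;7])
(SL [::6;5;2;3;1;4;7]))))
(SN 0 2 1 2
(SN 1 7 4 7
(SN 0 4 3 4
(SL [::4;5;6;2;3;1;7])
(SL [::2;6;5;4;3;1;7]))
(SN 0 1 1 6
(SL [::1;3;2;6;5;4;7])
(SL [::2;3;1;6;5;4;7])))
(SN 0 4 4 7
(SN 1 7 3 7
(SL [::4;5;6;2;3;1;7])
(SL [::4;5;6;2;1;3;7]))
(SN 0 1 0 3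
(SL [::1;3;2;6;5;4;7])
(SL [::3;1;2;6;5;4;7])))))
(SN 1 4 3 4
(SN 3 5 4 5
(SN 0 4 4 7
(SN 3 7 6 7
(SL [::4;1;5;6;2;3;7])
(SL [::4;1;5;3;2;6;7]))
(SN 0 3 0 6
(SL [::3;2;6;5;1;4;7])
(SL [::6;2;3;5;1;4;7])))
(SN 0 3 3 7
(SN 1 7 4 7
(SL [::3;2;6;5;4;1;7])
(SL [::3;2;6;5;1;4;7]))
(SN 0 1 0 4
(SL [::1;4;5;6;2;3;7])
(SL [::4;1;5;6;2;3;7]))))
(SN 0 4 4 7
(SN 1 2 1 6
(SN 1 7 6 7
(SL [::4;3;2;6;5;1;7])
(SL [::4;3;2;1;5;6;7]))
(SN 1 7 5 7
(SL [::4;3;2;6;5;1;7])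
(SL [::4;3;2;6;1;5;7])))
(SN 0 5 0 6
(SN 0 1 1 6
(SL [::1;5;6;2;3;4;7])
(SL [::5;1;6;2;3;4;7]))
(SN 0 1 1 2
(SL [::1;5;6;2;3;4;7])
(SL [::6;5;1;2;3;4;7]))))))
(SN 1 4 1 5
(SN 1 3 3 5
(SN 0 3 3 7
(SN 2 5 2 7
(SN 5 7 6 7
(SL [::3;1;4;2;6;5;7])
(SL [::3;1;4;2;5;6;7]))
(SN 4 5 5 7
(SL [::3;1;4;5;6;2;7])
(SL [::3;1;4;2;6;5;7])))
(SN 0 2 0 6
(SN 0 5 4 5
(SL [::5;6;2;4;1;3;7])
(SL [::2;6;5;4;1;3;7]))
(SN 0 5 2 5
(SL [::5;6;2;4;1;3;7])
(SL [::6;5;2;4;1;3;7]))))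
(SN 0 2 1 2
(SN 1 7 3 7
(SN 0 3 3 4
(SL [::3;5;6;2;4;1;7])
(SL [::2;6;5;3;4;1;7]))
(SN 0 1 1 6
(SL [::1;4;2;6;5;3;7])
(SL [::2;4;1;6;5;3;7])))
(SN 0 3 3 7
(SN 1 7 4 7
(SL [::3;5;6;2;4;1;7])
(SL [::3;5;6;2;1;4;7]))
(SN 0 1 0 4
(SL [::1;4;2;6;5;3;7])
(SL [::4;1;2;6;5;3;7])))))
(SN 1 3 3 4
(SN 3 5 4 5
(SN 0 4 4 7
(SN 1 7 3 7
(SL [::4;2;6;5;3;1;7])
(SL [::4;2;6;5;1;3;7]))
(SN 0 1 0 3
(SL [::1;3;5;6;2;4;7])
(SL [::3;1;5;6;2;4;7])))
(SN 0 3 3 7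
(SN 4 7 6 7
(SL [::3;1;5;6;2;4;7])
(SL [::3;1;5;4;2;6;7]))
(SN 0 4 0 6
(SL [::4;2;6;5;1;3;7])
(SL [::6;2;4;5;1;3;7]))))
(SN 0 3 3 7
(SN 1 2 1 6
(SN 1 7 6 7
(SL [::3;4;2;6;5;1;7])
(SL [::3;4;2;1;5;6;7]))
(SN 1 7 5 7
(SL [::3;4;2;6;5;1;7])
(SL [::3;4;2;6;1;5;7])))
(SN 0 5 0 6
(SN 0 1 1 6
(SL [::1;5;6;2;4;3;7])
(SL [::5;1;6;2;4;3;7]))
(SN 0 1 1 2
(SL [::1;5;6;2;4;3;7])
(SL [::6;5;1;2;4;3;7]))))))))
(SN 3 4 4 6
(SN 1 6 5 6
(SN 1 2 1 5
(SN 2 5 4 5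
(SN 0 5 5 7
(SN 1 4 1 7
(SN 4 7 6 7
(SL [::5;2;1;6;3;4;7])
(SL [::5;2;1;4;3;6;7]))
(SN 2 4 4 7
(SL [::5;2;4;3;6;1;7])
(SL [::5;2;1;6;3;4;7])))
(SN 0 1 0 6
(SN 0 4 2 4
(SL [::4;3;6;1;2;5;7])
(SL [::1;6;3;4;2;5;7]))
(SN 0 4 1 4
(SL [::4;3;6;1;2;5;7])
(SL [::6;3;4;1;2;5;7]))))
(SN 0 5 5 7
(SN 2 3 2 4
(SN 2 7 6 7
(SL [::5;4;3;6;1;2;7])
(SL [::5;4;3;2;1;6;7]))
(SN 2 7 3 7
(SL [::5;4;3;6;1;2;7])
(SL [::5;4;2;1;6;3;7])))
(SN 0 3 0 6
(SN 0 2 2 4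
(SL [::2;1;6;3;4;5;7])
(SL [::3;6;1;2;4;5;7]))
(SN 0 2 2 3
(SL [::2;1;6;3;4;5;7])
(SL [::6;1;2;3;4;5;7])))))
(SN 2 4 2 5
(SN 0 2 2 7
(SN 3 5 3 7
(SN 5 7 6 7
(SL [::2;4;3;6;1;5;7])
(SL [::2;4;3;5;1;6;7]))
(SN 4 5 5 7
(SL [::2;4;5;1;6;3;7])
(SL [::2;4;3;6;1;5;7])))
(SN 0 3 0 6
(SN 0 5 4 5
(SL [::5;1;6;3;4;2;7])
(SL [::3;6;1;5;4;2;7]))
(SN 0 5 3 5
(SL [::5;1;6;3;4;2;7])
(SL [::6;1;5;3;4;2;7]))))
(SN 0 2 2 7
(SN 1 4 1 7
(SN 4 7 6 7
(SL [::2;5;1;6;3;4;7])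
(SL [::2;5;1;4;3;6;7]))
(SN 4 5 4 7
(SL [::2;5;4;3;6;1;7])
(SL [::2;5;1;6;3;4;7])))
(SN 0 1 0 6
(SN 0 4 4 5
(SL [::4;3;6;1;5;2;7])
(SL [::1;6;3;4;5;2;7]))
(SN 0 4 1 4
(SL [::4;3;6;1;5;2;7])
(SL [::6;3;4;1;5;2;7]))))))
(SN 1 4 1 5
(SN 1 2 2 5
(SN 0 2 0 5
(SN 3 5 3 7
(SN 5 7 6 7
(SL [::2;1;4;3;6;5;7])
(SL [::2;1;4;3;5;6;7]))
(SN 4 5 5 7
(SL [::2;1;4;5;6;3;7])
(SL [::2;1;4;3;6;5;7])))
(SN 1 7 2 3
(SN 2 4 2 7
(SL [::5;6;3;4;2;1;7])
(SL [::5;6;3;4;1;2;7]))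
(SN 2 7 4 7
(SL [::5;6;3;4;1;2;7])
(SL [::5;6;3;2;1;4;7]))))
(SN 0 1 1 7
(SN 2 3 2 4
(SN 2 7 6 7
(SL [::1;4;3;6;5;2;7])
(SL [::1;4;3;2;5;6;7]))
(SN 2 7 3 7
(SL [::1;4;3;6;5;2;7])
(SL [::1;4;2;5;6;3;7])))
(SN 0 3 0 6
(SN 0 2 2 4
(SL [::2;5;6;3;4;1;7])
(SL [::3;6;5;2;4;1;7]))
(SN 0 2 2 3
(SL [::2;5;6;3;4;1;7])
(SL [::6;5;2;3;4;1;7])))))
(SN 1 2 2 4
(SN 0 4 4 7
(SN 1 7 2 3
(SN 2 5 2 7
(SL [::4;3;6;5;2;1;7])
(SL [::4;3;6;5;1;2;7]))
(SN 2 7 6 7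
(SL [::4;3;6;5;1;2;7])
(SL [::4;3;2;1;5;6;7])))
(SN 0 1 0 6
(SN 0 2 2 5
(SL [::2;1;5;6;3;4;7])
(SL [::1;2;5;6;3;4;7]))
(SN 0 2 2 3
(SL [::2;1;5;6;3;4;7])
(SL [::6;5;1;2;3;4;7]))))
(SN 0 1 1 7
(SN 2 3 2 5
(SN 2 7 4 7
(SL [::1;5;6;3;4;2;7])
(SL [::1;5;6;3;2;4;7]))
(SN 2 7 6 7
(SL [::1;5;6;3;4;2;7])
(SL [::1;5;2;4;3;6;7])))
(SN 0 4 0 6
(SN 0 2 2 3
(SL [::2;4;3;6;5;1;7])
(SL [::4;2;3;6;5;1;7]))
(SN 0 2 2 5
(SL [::2;4;3;6;5;1;7])
(SL [::6;3;4;2;5;1;7])))))))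
(SN 2 3 2 4
(SN 1 4 4 5
(SN 1 5 2 5
(SN 0 2 2 7
(SN 3 5 4 7
(SN 5 7 6 7
(SL [::2;3;6;4;1;5;7])
(SL [::2;3;5;1;4;6;7]))
(SN 5 6 5 7
(SL [::2;3;6;5;1;4;7])
(SL [::2;3;6;4;1;5;7])))
(SN 0 4 0 6
(SN 0 5 5 6
(SL [::5;1;4;6;3;2;7])
(SL [::4;1;5;6;3;2;7]))
(SN 0 5 3 5
(SL [::5;1;4;6;3;2;7])
(SL [::6;4;1;5;3;2;7]))))
(SN 0 1 0 5
(SN 2 7 3 7
(SN 3 5 5 7
(SL [::1;4;6;3;5;2;7])
(SL [::1;4;6;3;2;5;7]))
(SN 5 6 5 7
(SL [::1;4;6;5;2;3;7])
(SL [::1;4;6;3;2;5;7])))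
(SN 1 2 1 3
(SN 1 7 3 7
(SL [::5;2;3;6;4;1;7])
(SL [::5;2;1;4;6;3;7]))
(SN 1 7 6 7
(SL [::5;2;3;6;4;1;7])
(SL [::5;2;3;1;4;6;7])))))
(SN 1 2 1 5
(SN 0 1 0 5
(SN 2 5 3 5
(SN 3 7 5 7
(SL [::1;2;5;4;6;3;7])
(SL [::1;2;3;6;4;5;7]))
(SN 5 7 6 7
(SL [::1;2;3;6;4;5;7])
(SL [::1;2;3;5;4;6;7])))
(SN 1 3 1 6
(SN 1 7 2 7
(SL [::5;4;6;3;2;1;7])
(SL [::5;4;6;3;1;2;7]))
(SN 1 7 3 7
(SL [::5;4;6;3;2;1;7])
(SL [::5;4;6;1;2;3;7]))))
(SN 0 2 2 7
(SN 1 3 1 6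
(SN 1 7 6 7
(SL [::2;3;6;4;5;1;7])
(SL [::2;3;1;5;4;6;7]))
(SN 1 7 4 7
(SL [::2;3;6;4;5;1;7])
(SL [::2;3;6;1;5;4;7])))
(SN 0 4 0 6
(SN 0 1 1 6
(SL [::1;5;4;6;3;2;7])
(SL [::4;5;1;6;3;2;7]))
(SN 0 1 1 3
(SL [::1;5;4;6;3;2;7])
(SL [::6;4;5;1;3;2;7]))))))
(SN 1 3 3 5
(SN 1 5 2 5
(SN 0 2 2 7
(SN 3 7 4 5
(SN 5 6 5 7
(SL [::2;4;6;5;1;3;7])
(SL [::2;4;6;3;1;5;7]))
(SN 5 7 6 7
(SL [::2;4;6;3;1;5;7])
(SL [::2;4;5;1;3;6;7])))
(SN 0 3 0 6
(SN 0 5 5 6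
(SL [::5;1;3;6;4;2;7])
(SL [::3;1;5;6;4;2;7]))
(SN 0 5 4 5
(SL [::5;1;3;6;4;2;7])
(SL [::6;3;1;5;4;2;7]))))
(SN 0 1 0 5
(SN 2 7 4 7
(SN 4 5 5 7
(SL [::1;3;6;4;5;2;7])
(SL [::1;3;6;4;2;5;7]))
(SN 5 6 5 7
(SL [::1;3;6;5;2;4;7])
(SL [::1;3;6;4;2;5;7])))
(SN 1 2 1 4
(SN 1 7 4 7
(SL [::5;2;4;6;3;1;7])
(SL [::5;2;1;3;6;4;7]))
(SN 1 7 6 7
(SL [::5;2;4;6;3;1;7])
(SL [::5;2;4;1;3;6;7])))))
(SN 1 2 1 5
(SN 0 1 0 5
(SN 2 5 3 7
(SN 4 7 5 7
(SL [::1;2;5;3;6;4;7])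
(SL [::1;2;4;6;3;5;7]))
(SN 5 6 5 7
(SL [::1;2;4;6;5;3;7])
(SL [::1;2;4;6;3;5;7])))
(SN 1 4 1 6
(SN 1 7 2 7
(SL [::5;3;6;4;2;1;7])
(SL [::5;3;6;4;1;2;7]))
(SN 1 7 4 7
(SL [::5;3;6;4;2;1;7])
(SL [::5;3;6;1;2;4;7]))))
(SN 0 2 2 7
(SN 1 4 1 6
(SN 1 7 6 7
(SL [::2;4;6;3;5;1;7])
(SL [::2;4;1;5;3;6;7]))
(SN 1 7 3 7
(SL [::2;4;6;3;5;1;7])
(SL [::2;4;6;1;5;3;7])))
(SN 0 3 0 6
(SN 0 1 1 6
(SL [::1;5;3;6;4;2;7])
(SL [::3;5;1;6;4;2;7]))
(SN 0 1 1 4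
(SL [::1;5;3;6;4;2;7])
(SL [::6;3;5;1;4;2;7]))))))))).

Lemma HK : chk 8 [::] [::] tK.
Proof. by vm_compute. Qed.

Lemma greedy n (x y : 'I_n) (tK : strat) (HK : chk 8 [::] [::] tK) : forall m q s R (B : {set {set 'I_n}}),
  size s = m + 6 -> perm_eq (x :: q ++ s ++ [:: y]) (enum 'I_n) ->
  path (redrel R) x q ->
  (forall a b, a \in last x q :: s ++ [:: y] -> b \in last x q :: s ++ [:: y] -> a != b ->
     ([set a; b] \notin R) && ([set a; b] \notin B)) ->
  waiter_wins x y (m + 8) R B.
Proof.
elim=> [|m IH] q s R B hs pe pq hf.
- have uq := perm_uniq pe; rewrite enum_uniq -cat1s catA cat_uniq in uq.
  case/and3P: uq => uq1 hn uq2.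
  have vq : last x q \notin s ++ [:: y].
    apply/negP=> hv; move/hasPn: hn => /(_ _ hv); rewrite /= mem_last //.
  set l := last x q :: s ++ [:: y].
  have ul : uniq l by rewrite /l /= vq uq2.
  have sl : size l = 8 by rewrite /l /= size_cat hs.
  pose f i := nth x l i.
  have finj : forall i j, i < 8 -> j < 8 -> f i = f j -> i = j.
    by move=> i j hi hj /eqP; rewrite /f nth_uniq ?sl // => /eqP.
  have fl : forall i, i < 8 -> f i \in l by move=> i hi; rewrite /f mem_nth ?sl.
  clear hn; move: hs pe hf vq uq2 ul sl finj fl; rewrite /f /l; clear f l.
  case: s => [|s1 [|s2 [|s3 [|s4 [|s5 [|s6 [|s7 s]]]]]]] //= _ pe hf vq uq2 ul sl finj fl.
  have -> : y = nth x [:: last x q, s1, s2, s3, s4, s5, s6 & [:: y]] 7 by [].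
  apply: (endgame finj HK _ _ pq) => //.
  + move=> a b ha hb ab; have := hf _ _ (fl a ha) (fl b hb).
    by rewrite (fneq finj) // => /(_ isT) /andP[/negbTE -> _].
  + move=> a b ha hb ab; have := hf _ _ (fl a ha) (fl b hb).
    by rewrite (fneq finj) // => /(_ isT) /andP[_ /negbTE ->].
- rewrite addSn.
  case: s hs pe hf => [|a [|b s]] hs pe hf; try by move: hs => /eqP; rewrite /= addSn ?eqSS ?addnS.
  set v := last x q.
  have uq := perm_uniq pe; rewrite enum_uniq -cat1s catA cat_uniq in uq.
  case/and3P: uq => uq1 hn uq2.
  have vq : v \notin a :: b :: s ++ [:: y].
    apply/negP=> hv; move/hasPn: hn => /(_ _ hv); rewrite /= mem_last //.
  move: uq2; rewrite /= !inE negb_or => /andP[/andP[ab _] /andP[bs _]].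
  have va : v != a by apply: contraNneq vq => ->; rewrite inE eqxx.
  have vb : v != b by apply: contraNneq vq => ->; rewrite !inE eqxx orbT.
  have hf' : forall c d, c \in v :: a :: b :: s ++ [:: y] -> d \in v :: a :: b :: s ++ [:: y] ->
     c != d -> ([set c; d] \notin R) && ([set c; d] \notin B) by [].
  right; exists [set v; a], [set v; b]; split.
  + by rewrite set2_eq // eqxx /= eq_sym (negbTE vb) /= orbF eq_sym.
  + by rewrite /free_edge /is_edge cards2 va /= hf' // !inE eqxx ?orbT.
  + by rewrite /free_edge /is_edge cards2 vb /= hf' // !inE eqxx ?orbT.
  + apply: (IH (rcons q a) (b :: s)).
    * by move: hs => [].
    * by rewrite cat_rcons.
    * by rewrite rcons_path (sub_path _ pq) /redrel ?setU11 // => c d h; rewrite in_setU1 h orbT.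
    * rewrite last_rcons => c d hc hd cd.
      have sub : forall e, e \in a :: b :: s ++ [:: y] -> e \in v :: a :: b :: s ++ [:: y].
        by move=> e he; rewrite inE he orbT.
      have hv : forall e, e \in a :: b :: s ++ [:: y] -> e != v.
        by move=> e he; apply: contraNneq vq => <-.
      have nv : forall X, [set c; d] != [set v; X].
        move=> X; apply/negP=> /eqP E.
        have : v \in [set c; d] by rewrite E !inE eqxx.
        rewrite !inE => /orP[] /eqP Ev.
        - by move: (hv c hc); rewrite Ev eqxx.
        - by move: (hv d hd); rewrite Ev eqxx.
      have /andP[h1 h2] := hf' c d (sub c hc) (sub d hd) cd.
      by rewrite !in_setU1 !negb_or h1 h2 !nv.
  + apply: (IH (rcons q b) (a :: s)).
    * by move: hs => [].
    * rewrite cat_rcons; apply: perm_trans pe; rewrite perm_cons perm_cat2l.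
      by rewrite -[b :: a :: _]cat1s -[a :: _]cat1s perm_catCA.
    * by rewrite rcons_path (sub_path _ pq) /redrel ?setU11 // => c d h; rewrite in_setU1 h orbT.
    * rewrite last_rcons => c d hc hd cd.
      have sub : forall e, e \in b :: a :: s ++ [:: y] -> e \in v :: a :: b :: s ++ [:: y].
        by move=> e; rewrite !inE => /orP[->|/orP[->|->]]; rewrite ?orbT.
      have hv : forall e, e \in b :: a :: s ++ [:: y] -> e != v.
        by move=> e he; apply: contraNneq vq => <-; move: he; rewrite !inE => /orP[->|/orP[->|->]]; rewrite ?orbT.
      have nv : forall X, [set c; d] != [set v; X].
        move=> X; apply/negP=> /eqP E.
        have : v \in [set c; d] by rewrite E !inE eqxx.
        rewrite !inE => /orP[] /eqP Ev.
        - by move: (hv c hc); rewrite Ev eqxx.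
        - by move: (hv d hd); rewrite Ev eqxx.
      have /andP[h1 h2] := hf' c d (sub c hc) (sub d hd) cd.
      by rewrite !in_setU1 !negb_or h1 h2 !nv.
Qed.


Lemma main_of (tK : strat) (HK : chk 8 [::] [::] tK) (n : nat) (x y : 'I_n) :
  8 <= n -> x != y -> waiter_wins x y n set0 set0.
Proof.
move=> hn xy.
set s := [seq z <- enum 'I_n | (z != x) && (z != y)].
have pe : perm_eq (x :: [::] ++ s ++ [:: y]) (enum 'I_n).
  apply: uniq_perm; rewrite ?enum_uniq //.
  - rewrite /= cat_uniq /= andbT filter_uniq ?enum_uniq // !mem_cat !inE negb_or xy /=.
    by rewrite /s !mem_filter eqxx /= ?andbF ?orbF /= eqxx andbF.
  - move=> z; rewrite mem_enum /= inE mem_cat mem_filter mem_enum inE andbT.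
    by rewrite inE; case: (z =P x) => //= _; case: (z =P y).
have hs : size s = (n - 8) + 6.
  have := perm_size pe; rewrite size_enum_ord /= size_cat /= addn1.
  have key : forall k N, k.+2 = N -> 8 <= N -> k = N - 8 + 6 by move=> k N; lia.
  by move/key; apply.
have := greedy HK hs pe _ _ (B := set0).
rewrite subnK //; apply => // a b _ _ _; by rewrite !in_set0.
Qed.

Theorem lemma3p2 (n : nat) (x y : 'I_n) :
  8 <= n -> x != y -> waiter_wins x y n set0 set0.
Proof. exact: (main_of HK). Qed.
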